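(* Let $n \geq 2$ and let $\lambda = (\lambda_1, \ldots, \lambda_n)$ be a partition with $n$ parts. Then \[ A_\lambda(n) = \sum_{j=1}^n \binom{\lambda_1 - \lambda_2 + j - 1}{\lambda_1 - \lambda_2} R(\lambda, j). \]
   Context: Six-vertex model: on a grid with $r$ rows and $c$ columns there are $r$ horizontal lines and $c$ vertical lines meeting in $rc$ vertices. Each horizontal line consists of $c+1$ edges (the outermost ones are a left and a right boundary edge) and each vertical line of $r+1$ edges (the outermost ones are a top and a bottom boundary edge). A state assigns an orientation to every edge, agreeing with prescribed orientations on the boundary edges, such that at every vertex exactly two of the four adjacent edges point into the vertex and two point out. A partition $\lambda=(\lambda_1,\dots,\lambda_n)$ means integers $\lambda_1 \geq \cdots \geq \lambda_n \geq 0$. $A_\lambda(n)$ is the number of states on the grid with $n$ rows and $n + \lambda_1$ columns with boundary conditions: left boundary arrows point right, right boundary arrows point left, bottom boundary arrows point down, and, numbering columns $1, \ldots, n+\lambda_1$ from right to left, the top boundary arrow in column $i$ points up if $i \in \{\lambda_k + n + 1 - k : 1 \leq k \leq n\}$ and down otherwise. Number rows $1,\dots,n$ from top to bottom. $R(\lambda, j)$ is the number of states on the grid formed by the rightmost $n + \lambda_2 - 1$ columns (columns $1, \ldots, n+\lambda_2-1$) with boundary conditions: the top, bottom and right boundary arrows are as in the model for $A_\lambda(n)$ (top arrow of column $i$ up iff $i \in \{\lambda_k + n+1-k\}$, bottom down, right boundary pointing left), and on the left boundary of this subgrid the arrow in row $j$ points left while all other arrows point right. *)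

(* Defs.v *)
From mathcomp Require Import all_boot.
Set Implicit Arguments. Unset Strict Implicit. Unset Printing Implicit Defensive.

(* Internal 0-based conventions:
   - row i : 'I_r is the paper's row i+1 (rows numbered top to bottom);
   - column k : 'I_c is the paper's column k+1 (columns numbered RIGHT to LEFT);
   - horizontal edges of row i are indexed by e in 0..c : e = 0 is the right
     boundary edge, e = c the left boundary edge; vertex (i,k) has right edge
     e = k and left edge e = k+1.  Value true = arrow points right.
   - vertical edges of column k are indexed by t in 0..r : t = 0 is the top
     boundary edge, t = r the bottom boundary edge; vertex (i,k) has top edge
     t = i and bottom edge t = i+1.  Value true = arrow points up. *)

Definition state (r c : nat) : finType :=
  ({ffun 'I_r -> {ffun 'I_c.+1 -> bool}} * {ffun 'I_c -> {ffun 'I_r.+1 -> bool}})%type.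

Definition hor r c (s : state r c) (i : 'I_r) (e : nat) : bool := s.1 i (inord e).
Definition ver r c (s : state r c) (k : 'I_c) (t : nat) : bool := s.2 k (inord t).

(* number of the four edges adjacent to vertex (i,k) pointing into it *)
Definition in_count r c (s : state r c) (i : 'I_r) (k : 'I_c) : nat :=
  (hor s i k.+1 : nat)
  + (~~ hor s i k : nat)
  + (~~ ver s k i : nat)
  + (ver s k i.+1 : nat).

(* lb i : left boundary arrow of row i points right;
   rb i : right boundary arrow of row i points right;
   tb k : top boundary arrow of column k points up;
   bb k : bottom boundary arrow of column k points up. *)
Definition valid_state r c (lb rb : 'I_r -> bool) (tb bb : 'I_c -> bool)
    (s : state r c) : bool :=
  [forall i : 'I_r, (hor s i c == lb i) && (hor s i 0 == rb i)] &&
  [forall k : 'I_c, (ver s k 0 == tb k) && (ver s k r == bb k)] &&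
  [forall i : 'I_r, forall k : 'I_c, in_count s i k == 2].

Definition nstates r c (lb rb : 'I_r -> bool) (tb bb : 'I_c -> bool) : nat :=
  #|[set s : state r c | valid_state lb rb tb bb s]|.

(* partitions: lam = [:: lambda_1; ...; lambda_n], nonincreasing *)
Definition lam_ (lam : seq nat) (k : nat) : nat := nth 0 lam k.-1. (* lambda_k, 1-based *)

(* paper column i (1-based, right to left) has top arrow up iff
   i \in {lambda_k + n + 1 - k : 1 <= k <= n} *)
Definition top_up (lam : seq nat) (i : nat) : bool :=
  let n := size lam in i \in [seq lam_ lam k + n + 1 - k | k <- iota 1 n].

Definition A_lam (lam : seq nat) : nat :=
  let n := size lam in
  @nstates n (n + lam_ lam 1)
    (fun _ => true) (fun _ => false)
    (fun k => top_up lam k.+1) (fun _ => false).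

Definition R_lam (lam : seq nat) (j : nat) : nat :=
  let n := size lam in
  @nstates n (n + lam_ lam 2 - 1)
    (fun i => i.+1 != j) (fun _ => false)
    (fun k => top_up lam k.+1) (fun _ => false).

(* Main.v *)
Require Import Defs.
From mathcomp Require Import all_boot.
From mathcomp Require Import zify.
Set Implicit Arguments. Unset Strict Implicit. Unset Printing Implicit Defensive.


Definition nst r c (lb rb : 'I_r -> bool) (tb bb : nat -> bool) :=
  @nstates r c lb rb (fun k : 'I_c => tb k) (fun k : 'I_c => bb k).

Section Split.
Variables (r c1 c2 : nat).

Definition splitL (s : state r (c2 + c1)) : state r c1 :=
  ([ffun i => [ffun e : 'I_c1.+1 => hor s i (c2 + e)]], [ffun k : 'I_c1 => s.2 (rshift c2 k)]).
Definition splitR (s : state r (c2 + c1)) : state r c2 :=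
  ([ffun i => [ffun e : 'I_c2.+1 => hor s i e]], [ffun k : 'I_c2 => s.2 (lshift c1 k)]).
Definition glue (p : state r c1 * state r c2) : state r (c2 + c1) :=
  ([ffun i => [ffun e : 'I_(c2+c1).+1 => if e < c2 then hor p.2 i e else hor p.1 i (e - c2)]],
   [ffun k => match split k with inl k' => p.2.2 k' | inr k' => p.1.2 k' end]).

Lemma horL s i e : e <= c1 -> hor (splitL s) i e = hor s i (c2 + e).
Proof. by move=> he; rewrite /hor !ffunE inordK. Qed.
Lemma horR s i e : e <= c2 -> hor (splitR s) i e = hor s i e.
Proof. by move=> he; rewrite /hor !ffunE inordK. Qed.
Lemma verL s k t : ver (splitL s) k t = ver s (rshift c2 k) t.
Proof. by rewrite /ver ffunE. Qed.
Lemma verR s k t : ver (splitR s) k t = ver s (lshift c1 k) t.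
Proof. by rewrite /ver ffunE. Qed.

Lemma hor_glue p i e : e <= c2 + c1 ->
  hor (glue p) i e = if e < c2 then hor p.2 i e else hor p.1 i (e - c2).
Proof. by move=> he; rewrite /hor !ffunE inordK. Qed.
Lemma ver_glueR p k t : ver (glue p) (lshift c1 k) t = ver p.2 k t.
Proof. by rewrite /ver ffunE -[lshift _ _]/(unsplit (inl k)) unsplitK. Qed.
Lemma ver_glueL p k t : ver (glue p) (rshift c2 k) t = ver p.1 k t.
Proof. by rewrite /ver ffunE -[rshift _ _]/(unsplit (inr k)) unsplitK. Qed.

Lemma glueK : cancel (fun s => (splitL s, splitR s)) glue.
Proof.
move=> [a b]; congr pair.
  apply/ffunP => i; apply/ffunP => e; rewrite ffunE ffunE.
  have := ltn_ord e => hE.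
  case: ifP => he.
    rewrite horR. by rewrite /hor inord_val. lia. 
  rewrite horL; last by lia.
  rewrite subnKC; last by lia.
  by rewrite /hor inord_val.
apply/ffunP => k; rewrite ffunE.
case: splitP => k' hk.
  rewrite ffunE.
  have -> : lshift c1 k' = k by apply: val_inj; rewrite /= hk.
  done.
rewrite ffunE.
have -> : rshift c2 k' = k by apply: val_inj; rewrite /= hk.
done.
Qed.



Definition iface (s : state r (c2 + c1)) := [ffun i => hor s i c2].

Lemma in_countR s i k : in_count (splitR s) i k = in_count s i (lshift c1 k).
Proof.
have := ltn_ord k => hk.
by rewrite /in_count !horR ?verR //; lia.
Qed.
Lemma in_countL s i k : in_count (splitL s) i k = in_count s i (rshift c2 k).
Proof.
have := ltn_ord k => hk.
by rewrite /in_count !horL ?verL /= ?addnS //; lia.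
Qed.

Lemma hor_glueR p i e : hor p.1 i 0 = hor p.2 i c2 -> e <= c2 ->
  hor (glue p) i e = hor p.2 i e.
Proof.
move=> hi he; rewrite hor_glue; last by lia.
case: ifP => // /negbT; rewrite -leqNgt => h.
have -> : e = c2 by lia.
by rewrite subnn.
Qed.
Lemma hor_glueL p i e : c2 <= e -> e <= c2 + c1 ->
  hor (glue p) i e = hor p.1 i (e - c2).
Proof.
move=> h1 h2; rewrite hor_glue //.
by case: ifP => //; lia.
Qed.

Lemma in_count_glueR p i k : hor p.1 i 0 = hor p.2 i c2 ->
  in_count (glue p) i (lshift c1 k) = in_count p.2 i k.
Proof.
move=> hi; have := ltn_ord k => hk.
by rewrite /in_count /= !hor_glueR ?ver_glueR //; lia.
Qed.
Lemma in_count_glueL p i k :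
  in_count (glue p) i (rshift c2 k) = in_count p.1 i k.
Proof.
have := ltn_ord k => hk.
rewrite /in_count /= !hor_glueL ?ver_glueL /=; try lia.
by rewrite -addnS !(addnC c2) !addnK.
Qed.


Lemma split_glue a b : (forall i, hor a i 0 = hor b i c2) ->
  (splitL (glue (a, b)), splitR (glue (a, b))) = (a, b).
Proof.
move=> hi; congr pair; case: a hi => a1 a2; case: b => b1 b2 hi; congr pair.
- apply/ffunP => i; apply/ffunP => e; rewrite !ffunE.
  have := ltn_ord e => he.
  rewrite hor_glueL; [|lia|lia]. by rewrite addnC addnK /hor inord_val.
- apply/ffunP => k; rewrite !ffunE -[rshift _ _]/(unsplit (inr k)) unsplitK //.
- apply/ffunP => i; apply/ffunP => e; rewrite !ffunE.
  have := ltn_ord e => he.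
  rewrite hor_glueR; [|exact: hi|lia]. by rewrite /hor inord_val.
- apply/ffunP => k; rewrite !ffunE -[lshift _ _]/(unsplit (inl k)) unsplitK //.
Qed.


Lemma split_count (lb rb : 'I_r -> bool) (tb bb : nat -> bool) :
  nst (c2 + c1) lb rb tb bb = \sum_(v : {ffun 'I_r -> bool})
    nst c1 lb v (fun k => tb (c2 + k)) (fun k => bb (c2 + k)) * nst c2 v rb tb bb.
Proof.
rewrite /nst /nstates.
rewrite -sum1_card (partition_big (@iface) predT) //=.
apply: eq_bigr => v _.
rewrite sum1dep_card -cardsX.
rewrite -(card_imset _ (can_inj glueK)).
apply: eq_card => -[a b]; rewrite !inE; apply/imsetP/andP.
- case => s; rewrite !inE => /andP [sS /eqP iv] [-> ->].
  move: sS => /andP [/andP [/forallP h1 /forallP h2] /forallP h3].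
  split; (apply/andP; split; [apply/andP; split|]); apply/forallP => i.
  + rewrite !horL // addn0 (eqP (proj1 (andP (h1 i)))) -iv ffunE !eqxx //.
  + rewrite verL /= (eqP (proj1 (andP (h2 (rshift c2 i))))) eqxx /=.
    by rewrite verL (eqP (proj2 (andP (h2 (rshift c2 i))))) eqxx.
  + apply/forallP => k; rewrite in_countL; exact: (forallP (h3 i)).
  + rewrite !horR // (eqP (proj2 (andP (h1 i)))) -iv ffunE !eqxx //.
  + rewrite !verR (eqP (proj1 (andP (h2 (lshift c1 i))))) eqxx /=.
    by rewrite (eqP (proj2 (andP (h2 (lshift c1 i))))) eqxx.
  + apply/forallP => k; rewrite in_countR; exact: (forallP (h3 i)).
- move=> [/andP [/andP [/forallP a1 /forallP a2] /forallP a3]].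
  move=> /andP [/andP [/forallP b1 /forallP b2] /forallP b3].
  have hi : forall i, hor a i 0 = hor b i c2.
    by move=> i; rewrite (eqP (proj2 (andP (a1 i)))) (eqP (proj1 (andP (b1 i)))).
  exists (glue (a, b)); last by rewrite split_glue.
  rewrite !inE; apply/andP; split; last first.
    apply/eqP/ffunP => i; rewrite ffunE hor_glueR; [|exact: hi|by []].
    exact: (eqP (proj1 (andP (b1 i)))).
  apply/andP; split; [apply/andP; split|]; apply/forallP => i.
  + rewrite hor_glueL ?leq_addr // addKn (eqP (proj1 (andP (a1 i)))) eqxx /=.
    by rewrite hor_glueR; [rewrite (eqP (proj2 (andP (b1 i))))|exact: hi|by []].
  + rewrite -(splitK i); case: (split i) => k /=.
    * by rewrite !ver_glueR (eqP (proj1 (andP (b2 k)))) (eqP (proj2 (andP (b2 k)))) !eqxx.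
    * by rewrite !ver_glueL (eqP (proj1 (andP (a2 k)))) (eqP (proj2 (andP (a2 k)))) !eqxx.
  + apply/forallP => k; rewrite -(splitK k); case: (split k) => k' /=.
    * by rewrite in_count_glueR; [exact: (forallP (b3 i))|exact: hi].
    * by rewrite in_count_glueL; exact: (forallP (a3 i)).
Qed.

End Split.


Lemma nst_ext r c (lb rb lb' rb' : 'I_r -> bool) (tb bb tb' bb' : nat -> bool) :
  (forall i, lb i = lb' i) -> (forall i, rb i = rb' i) ->
  (forall k, k < c -> tb k = tb' k) -> (forall k, k < c -> bb k = bb' k) ->
  nst c lb rb tb bb = nst c lb' rb' tb' bb'.
Proof.
move=> h1 h2 h3 h4; rewrite /nst /nstates; apply: eq_card => s; rewrite !inE /valid_state.
congr (_ && _ && _); apply: eq_forallb => i.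
- by rewrite h1 h2.
- by rewrite h3 ?h4.
Qed.

Definition cnt r (f : 'I_r -> bool) (i : nat) : nat := \sum_(t < r) ((t < i) && ~~ f t).

Lemma cnt0 r f : @cnt r f 0 = 0.
Proof. by rewrite /cnt big1. Qed.

Lemma cntS r f i (hi : i < r) : @cnt r f i.+1 = cnt f i + ~~ f (Ordinal hi).
Proof.
rewrite /cnt (bigD1 (Ordinal hi)) //= ltnSn /= addnC; congr (_ + _).
rewrite [in RHS](bigD1 (Ordinal hi)) //= ltnn /= add0n; apply: eq_bigr => t ht.
have : val t != i by apply: contra ht => /eqP e; apply/eqP/val_inj.
by rewrite ltnS leq_eqVlt => /negbTE ->.
Qed.

Lemma cnt_le r f i j : i <= j -> @cnt r f i <= cnt f j.
Proof.
move=> hij; apply: leq_sum => t _.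
case: (boolP (t < i)) => h //=.
by have -> : t < j by apply: leq_trans h hij.
Qed.

Section Col.
Variables (r : nat) (lb rb : 'I_r -> bool) (t b : bool).

Lemma col_inv s : valid_state lb rb (fun _ : 'I_1 => t) (fun _ => b) s ->
  forall i, i <= r -> (~~ ver s ord0 i) + cnt lb i = ~~t + cnt rb i.
Proof.
move=> /andP [/andP [/forallP h1 /forallP h2] /forallP h3].
elim => [|i IH] hi.
  by rewrite !cnt0 (eqP (proj1 (andP (h2 ord0)))).
have := forallP (h3 (Ordinal hi)) ord0.
rewrite /in_count /= (eqP (proj1 (andP (h1 (Ordinal hi))))) (eqP (proj2 (andP (h1 (Ordinal hi))))).
rewrite !cntS; have := IH (ltnW hi).
case: (ver s ord0 i); case: (ver s ord0 i.+1); case: (lb _); case: (rb _) => /=; lia.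
Qed.


Definition Yc i := ~~t + cnt rb i - cnt lb i.
Definition col_ok := [forall i : 'I_r.+1, (Yc i <= 1) && (cnt lb i <= ~~t + cnt rb i)]
   && (~~t + cnt rb r == ~~b + cnt lb r).
Definition s0 : state r 1 := ([ffun i => [ffun e : 'I_2 => if val e == 0 then rb i else lb i]],
   [ffun _ => [ffun i : 'I_r.+1 => Yc i == 0]]).

Lemma col_valid s : valid_state lb rb (fun _ : 'I_1 => t) (fun _ => b) s -> col_ok /\ s = s0.
Proof.
move=> hv; have inv := col_inv hv.
move: hv => /andP [/andP [/forallP h1 /forallP h2] /forallP h3].
split.
  apply/andP; split.
    apply/forallP => i; have := inv i (ltn_ord i); rewrite /Yc.
    by case: (ver s ord0 i) => /=; lia.
  have := inv r (leqnn r); rewrite (eqP (proj2 (andP (h2 ord0)))).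
  by move=> <-; rewrite addnC.
case: s inv h1 h2 h3 => s1 s2 /= inv h1 h2 h3; congr pair.
  apply/ffunP => i; apply/ffunP => e; rewrite !ffunE.
  have := h1 i; rewrite /hor /=.
  case: e => [[|[|e]] he] //= /andP [/eqP h /eqP h']; [rewrite -h'|rewrite -h]; congr (s1 i _); apply: val_inj; rewrite /= inordK //.
apply/ffunP => k; rewrite ffunE (ord1 k); apply/ffunP => i; rewrite ffunE.
have := inv i (ltn_ord i); rewrite /Yc /ver /= inord_val.
by case: (s2 ord0 i) => /=; lia.
Qed.


Lemma s0_valid : col_ok -> valid_state lb rb (fun _ : 'I_1 => t) (fun _ => b) s0.
Proof.
move=> /andP [/forallP hc /eqP hr].
have hY : forall i, i <= r -> Yc i <= 1 /\ cnt lb i <= ~~t + cnt rb i.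
  by move=> i hi; have /andP [] := hc (Ordinal (hi : i < r.+1)).
have ver0 : forall k i, i <= r -> ver s0 k i = (Yc i == 0).
  by move=> k i hi; rewrite /ver !ffunE inordK.
apply/andP; split; [apply/andP; split|]; apply/forallP => i.
- by rewrite /hor !ffunE /= !inordK //= !eqxx.
- rewrite !ver0 // /Yc !cnt0 hr.
  by case: t; case: b; rewrite ?addnK ?subn0 /=.
- apply/forallP => k; rewrite /in_count !ver0 ?(ltnW (ltn_ord i)) ?(ltn_ord i) //.
  rewrite (ord1 k) /hor !ffunE /= !inordK //=; try done.
  have [h1 h2] := hY i (ltnW (ltn_ord i)).
  have [h3 h4] := hY i.+1 (ltn_ord i).
  move: h1 h2 h3 h4; rewrite /Yc (cntS lb (ltn_ord i)) (cntS rb (ltn_ord i)).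
  have -> : Ordinal (ltn_ord i) = i by apply: val_inj.
  move: (cnt lb i) (cnt rb i) => B C.
  rewrite !subn_eq0.
  case: (lb i); case: (rb i); case: t => /=; do 2 case: leqP => /=; lia.
Qed.

Lemma col_count : nst 1 lb rb (fun _ => t) (fun _ => b) = col_ok.
Proof.
rewrite /nst /nstates.
case: (boolP col_ok) => h.
  have -> : [set s | valid_state lb rb (fun _ : 'I_1 => t) (fun _ => b) s] = [set s0].
    apply/setP => s; rewrite !inE; apply/idP/eqP.
      by move=> /col_valid [].
    by move=> ->; apply: s0_valid.
  by rewrite cards1.
have -> : [set s | valid_state lb rb (fun _ : 'I_1 => t) (fun _ => b) s] = set0.
  apply/setP => s; rewrite !inE; apply/negP => /col_valid [] hh.
  by rewrite hh in h.
by rewrite cards0.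
Qed.

End Col.


Definition E r j : {ffun 'I_r -> bool} := [ffun i : 'I_r => i.+1 != j].

Lemma cnt_true r i : @cnt r (fun _ => true) i = 0.
Proof. by rewrite /cnt big1 // => t _; rewrite andbF. Qed.

Lemma cntE r j i : 1 <= j <= r -> @cnt r (E r j) i = (j <= i).
Proof.
move=> /andP [h1 h2]; have hj : j.-1 < r by lia.
rewrite /cnt (bigD1 (Ordinal hj)) //= big1 ?addn0.
  by rewrite ffunE /= prednK // eqxx /=; rewrite andbT; case: (leqP j i); lia.
move=> t ht; rewrite ffunE.
have : val t != j.-1 by apply: contra ht => /eqP e; apply/eqP/val_inj.
by case: (t.+1 =P j) => [<-|] //=; rewrite ?andbF //; move=> h; case: (t < i) => //; lia.
Qed.

Lemma cnt1E r (v : {ffun 'I_r -> bool}) : cnt v r = 1 -> exists2 j, 1 <= j <= r & v = E r j.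
Proof.
rewrite /cnt => h.
have : \sum_(t < r | predT t) (~~ v t : nat) == 1.
  by rewrite -h; apply/eqP; apply: eq_bigr => t _; rewrite ltn_ord.
move=> /sum_nat_eq1 [i [_ hi hj]].
exists i.+1; first by have := ltn_ord i; lia.
apply/ffunP => t; rewrite ffunE eqSS.
case: (eqVneq t i) => [->|ne]; first by rewrite eqxx; move: hi; case: (v i).
have := hj t ne isT; case: (v t) => //= _.
Qed.

Lemma E_inj r j j' : 1 <= j <= r -> 1 <= j' <= r -> E r j = E r j' -> j = j'.
Proof.
move=> h1 h2 h; have hj : j.-1 < r by lia.
have := congr1 (fun f : {ffun 'I_r -> bool} => f (Ordinal hj)) h; rewrite !ffunE /= prednK ?eqxx; last by lia.
by case: (j.-1.+1 =P j') => //; lia.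
Qed.

Lemma charac r (v : {ffun 'I_r -> bool}) (G : nat) (F : nat -> nat) :
  (forall j, 1 <= j <= r -> v = E r j -> G = F j) ->
  ((forall j, 1 <= j <= r -> v != E r j) -> G = 0) ->
  G = \sum_(1 <= j < r.+1) (v == E r j) * F j.
Proof.
move=> h1 h2.
case: (boolP [exists j : 'I_r, v == E r j.+1]) => [/existsP [j /eqP hj]|hn].
  have hr : 1 <= j.+1 <= r by have := ltn_ord j; lia.
  rewrite (h1 _ hr hj) (big_cat_nat (n := j.+2)) //=.
  rewrite big_nat_recr //= big1_seq ?add0n; last first.
    move=> k; rewrite mem_index_iota => hk.
    case: eqP => // hE; exfalso; have hk' : 1 <= k <= r by lia.
    have := E_inj hr hk' (etrans (esym hj) hE); lia.
  rewrite hj eqxx mul1n big1_seq ?addn0 // => k; rewrite mem_index_iota => hk.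
  case: eqP => // hE; exfalso; have hk' : 1 <= k <= r by lia.
    have := E_inj hr hk' hE; lia.
rewrite h2; last first.
  move=> j hj; apply/eqP => e; move/existsP: hn; apply.
  have hj' : j.-1 < r by lia.
  by exists (Ordinal hj'); rewrite /= prednK ?e //; lia.
rewrite big1_seq // => k; rewrite mem_index_iota => hk.
case: eqP => // e; move/existsP: hn; case.
have hk' : k.-1 < r by lia.
by exists (Ordinal hk'); rewrite /= prednK ?e //; lia.
Qed.

Lemma colA r (v : {ffun 'I_r -> bool}) :
  nst 1 (fun _ => true) v (fun k => k == 0) (fun _ => false) =
  \sum_(1 <= j < r.+1) (v == E r j) * 1.
Proof.
rewrite (@nst_ext r 1 _ _ (fun _ => true) v _ _ (fun _ => true) (fun _ => false)) //; last by case.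
rewrite col_count; apply: charac.
  move=> j hj ->; apply/eqP; rewrite eqb1; apply/andP; split.
    apply/forallP => i; rewrite /Yc !cnt_true !cntE //=.
    by case: (j <= i).
  by rewrite !cntE // cnt_true; case/andP: hj => _ ->.
move=> hn; apply/eqP; rewrite eqb0; apply/negP => /andP [_ /eqP].
rewrite cnt_true /= add0n => /cnt1E [j hj e].
by move: (hn j hj); rewrite e eqxx.
Qed.

Lemma colB r (v : {ffun 'I_r -> bool}) j' (tb : nat -> bool) : 1 <= j' <= r -> tb 0 = false ->
  nst 1 (E r j') v tb (fun _ => false) =
  \sum_(1 <= j < r.+1) (v == E r j) * (j' <= j).
Proof.
move=> hj' ht.
rewrite (@nst_ext r 1 _ _ (E r j') v _ _ (fun _ => false) (fun _ => false)) //; last by case.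
rewrite col_count; apply: charac.
  move=> j hj ->; rewrite /col_ok !cntE // /Yc /=.
  case: (leqP j' j) => hjj.
    apply/eqP; rewrite eqb1; apply/andP; split; last by case/andP: hj => _ ->; case/andP: hj' => _ ->.
    apply/forallP => i; rewrite !cntE //.
    by case: (leqP j i); case: (leqP j' i) => //=; lia.
  apply/eqP; rewrite eqb0; apply/negP => /andP [/forallP h _].
  have hjr : j < r.+1 by lia.
  move: (h (Ordinal hjr)); rewrite /= !cntE // leqnn.
  by case: (leqP j' j) => //=; lia.
move=> hn; apply/eqP; rewrite eqb0; apply/negP => /andP [_ /eqP].
rewrite cntE //=; case/andP: hj' => _ ->; move=> /addnI /cnt1E [j hj e].
by move: (hn j hj); rewrite e eqxx.
Qed.

Lemma hockey m j : \sum_(1 <= j' < j.+1) 'C(m + j' - 1, m) = 'C(m + j, m.+1).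
Proof.
elim: j => [|j IH]; first by rewrite big_nil bin_small // addn0.
rewrite big_nat_recr //= IH addnS binS; congr (_ + _).
by rewrite subn1.
Qed.

Lemma sum_le r j (X : nat -> nat) : j <= r ->
  \sum_(1 <= j' < r.+1) (j' <= j) * X j' = \sum_(1 <= j' < j.+1) X j'.
Proof.
move=> hj; rewrite (big_cat_nat (n := j.+1)) //= ?ltnS // [X in _ + X]big1_seq ?addn0.
  by apply: eq_big_seq => k; rewrite mem_index_iota => /andP [_ hk]; rewrite -ltnS hk mul1n.
move=> k; rewrite mem_index_iota => hk; rewrite leqNgt; have -> : j < k by lia.
by [].
Qed.

Lemma pick_u r (j' : nat) (F : {ffun 'I_r -> bool} -> nat) :
  \sum_(u : {ffun 'I_r -> bool}) (u == E r j') * F u = F (E r j').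
Proof.
rewrite (bigD1 (E r j')) //= eqxx mul1n big1 ?addn0 // => u /negbTE ->.
by rewrite mul0n.
Qed.

Lemma left_count r m (v : {ffun 'I_r -> bool}) :
  nst m.+1 (fun _ => true) v (fun k => k == m) (fun _ => false) =
  \sum_(1 <= j < r.+1) (v == E r j) * 'C(m + j - 1, m).
Proof.
elim: m v => [|m IH] v.
  rewrite colA; apply: eq_bigr => j _; by rewrite bin0.
rewrite -[m.+2]/(1 + m.+1) split_count.
transitivity (\sum_(u : {ffun 'I_r -> bool})
   (\sum_(1 <= j' < r.+1) (u == E r j') * 'C(m + j' - 1, m)) *
     nst 1 u v (fun k => k == m.+1) (fun _ => false)).
  apply: eq_bigr => u _; congr (_ * _); rewrite -IH; apply: nst_ext => // k _.
rewrite (eq_bigr (fun u => \sum_(1 <= j' < r.+1) (u == E r j') * 'C(m + j' - 1, m) * nst 1 u v (fun k => k == m.+1) (fun _ => false))); last by move=> u _; rewrite big_distrl.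
rewrite exchange_big /=.
transitivity (\sum_(1 <= j' < r.+1) 'C(m + j' - 1, m) *
   \sum_(1 <= j < r.+1) (v == E r j) * (j' <= j)).
  apply: eq_big_seq => j'; rewrite mem_index_iota => hj'.
  under eq_bigr => u _ do rewrite mulnAC.
  by rewrite -big_distrl /= pick_u colB // mulnC.
under eq_bigr => j' _ do rewrite big_distrr /=.
rewrite exchange_big /=; apply: eq_big_seq => j; rewrite mem_index_iota => hj.
under eq_bigr => j' _ do rewrite mulnCA.
rewrite -big_distrr /=; congr (_ * _).
under eq_bigr => j' _ do rewrite mulnC.
rewrite sum_le; last by lia.
by rewrite hockey addSn subn1.
Qed.


Lemma sorted_lam (lam : seq nat) k : sorted geq lam -> 2 <= k <= size lam ->
  lam_ lam k <= lam_ lam 2.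
Proof.
move=> hs hk.
have tr : transitive geq by move=> a b c h1 h2; apply: leq_trans h2 h1.
have := sorted_leq_nth tr (@leqnn) 0 hs; move=> /(_ 1 k.-1); rewrite !inE /lam_ /= => h.
apply: h; lia.
Qed.

Lemma sorted_lam12 (lam : seq nat) : sorted geq lam -> 2 <= size lam ->
  lam_ lam 2 <= lam_ lam 1.
Proof.
move=> hs hk.
have tr : transitive geq by move=> a b c h1 h2; apply: leq_trans h2 h1.
have := sorted_leq_nth tr (@leqnn) 0 hs; move=> /(_ 0 1); rewrite !inE /lam_ /= => h.
apply: h; lia.
Qed.

Lemma topA (lam : seq nat) k : sorted geq lam -> 2 <= size lam ->
  k <= lam_ lam 1 - lam_ lam 2 ->
  top_up lam (size lam + lam_ lam 2 - 1 + k).+1 = (k == lam_ lam 1 - lam_ lam 2).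
Proof.
move=> hs hn hk; have h12 := sorted_lam12 hs hn.
rewrite /top_up; case: eqP => [->|ne].
  apply/mapP; exists 1; first by rewrite mem_iota; lia.
  lia.
apply/negP => /mapP [q]; rewrite mem_iota => hq e.
case: (eqVneq q 1) => [eq1|ne1].
  by move: e; rewrite eq1; lia.
have := sorted_lam hs (_ : 2 <= q <= size lam); lia.
Qed.

Theorem lemma3 (n : nat) (lam : seq nat) :
  2 <= n -> size lam = n -> sorted geq lam ->
  A_lam lam =
  \sum_(1 <= j < n.+1)
     'C(lam_ lam 1 - lam_ lam 2 + j - 1, lam_ lam 1 - lam_ lam 2) * R_lam lam j.
Proof.
move=> hn hsz hs.
have hn' : 2 <= size lam by rewrite hsz.
have h12 := sorted_lam12 hs hn'.
have top := fun k => topA (k := k) hs hn'; rewrite hsz in top.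
set m := lam_ lam 1 - lam_ lam 2.
have -> : A_lam lam = nst (n + lam_ lam 1) (fun _ : 'I_n => true) (fun _ => false)
   (fun k => top_up lam k.+1) (fun _ => false) by rewrite /A_lam hsz.
have -> : n + lam_ lam 1 = (n + lam_ lam 2 - 1) + m.+1 by rewrite /m; lia.
rewrite split_count.
transitivity (\sum_(v : {ffun 'I_n -> bool})
   (\sum_(1 <= j < n.+1) (v == E n j) * 'C(m + j - 1, m)) *
   nst (n + lam_ lam 2 - 1) v (fun _ => false) (fun k => top_up lam k.+1) (fun _ => false)).
  apply: eq_bigr => v _; congr (_ * _); rewrite -left_count; apply: nst_ext => // k hk.

rewrite (eq_bigr (fun v => \sum_(1 <= j < n.+1) (v == E n j) * 'C(m + j - 1, m) *
   nst (n + lam_ lam 2 - 1) v (fun _ => false) (fun k => top_up lam k.+1) (fun _ => false)));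
  last by move=> v _; rewrite big_distrl.
rewrite exchange_big /=; apply: eq_bigr => j _.
under eq_bigr => v _ do rewrite mulnAC.
rewrite -big_distrl /= pick_u mulnC; congr (_ * _).
rewrite /R_lam hsz.
transitivity (nst (n + lam_ lam 2 - 1) (fun i : 'I_n => i.+1 != j) (fun _ => false) (fun k => top_up lam k.+1) (fun _ => false)); last by [].
apply: nst_ext => // i.
by rewrite ffunE.
Qed.
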